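(* Let $n\in\mathbb N$ and let $S$ be a well ordered subsemigroup of the nonnegative part of $\mathbb R^n$ with the lexicographic order. Suppose that $S$ has ordinal type $\le\omega^h$ for some $h\in\mathbb N$. Then $S$ has ordinal type $\le\omega^n$.
   Context: $\omega$ denotes the ordinal type of $\mathbb N$. The lexicographic order on $\mathbb R^n$ compares first coordinates first. *)

(* Defs.v *)
From Stdlib Require Import Reals.
Open Scope R_scope.

(* A vector of R^n is represented as a function nat -> R whose coordinates
   with index >= n vanish. *)
Definition in_Rn (n : nat) (x : nat -> R) : Prop :=
  forall i, (n <= i)%nat -> x i = 0.

Definition vzero : nat -> R := fun _ => 0.
Definition vadd (x y : nat -> R) : nat -> R := fun i => x i + y i.

Definition lex_lt {A : Type} (lt : A -> A -> Prop) (n : nat)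
  (x y : nat -> A) : Prop :=
  exists k, (k < n)%nat /\ (forall i, (i < k)%nat -> x i = y i) /\ lt (x k) (y k).

Definition lex_nonneg (n : nat) (x : nat -> R) : Prop :=
  (forall i, x i = 0) \/ lex_lt Rlt n vzero x.

Definition lex_nonneg_subsemigroup (n : nat) (S : (nat -> R) -> Prop) : Prop :=
  (forall x, S x -> in_Rn n x /\ lex_nonneg n x) /\
  (forall x y, S x -> S y -> S (vadd x y)).

Definition lex_well_ordered (n : nat) (S : (nat -> R) -> Prop) : Prop :=
  forall T : (nat -> R) -> Prop,
    (forall x, T x -> S x) -> (exists x, T x) ->
    exists m, T m /\ forall x, T x -> ~ lex_lt Rlt n x m.

(* The ordinal omega^h is realised as N^h with the lexicographic order
   (first coordinate most significant).  A well ordered set has ordinal type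
   <= omega^h iff it admits a strictly order-preserving map into omega^h. *)
Definition ord_type_le_omega_pow (n : nat) (S : (nat -> R) -> Prop) (h : nat)
  : Prop :=
  exists f : (nat -> R) -> (nat -> nat),
    forall x y, S x -> S y -> lex_lt Rlt n x y -> lex_lt lt h (f x) (f y).

(* Main.v *)
Require Import Defs.
From Stdlib Require Import Reals Lra Lia List ClassicalEpsilon Classical FunctionalExtensionality PropExtensionality.
Open Scope R_scope.
Lemma ev_const (s : nat -> nat) (c : nat) :
  (forall j, (s j <= s (S j))%nat) -> (forall j, (s j <= c)%nat) ->
  exists J d, forall j, (J <= j)%nat -> s j = d.
Proof.
  intros Hm Hb.
  assert (Hmon : forall i j, (i <= j)%nat -> (s i <= s j)%nat).
  { intros i j Hij; induction Hij; [lia|]. specialize (Hm m); lia. }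
  assert (forall K J0, (c - s J0 <= K)%nat -> exists J d, forall j, (J <= j)%nat -> s j = d).
  { induction K; intros J0 HK.
    - exists J0, (s J0). intros j Hj. pose proof (Hmon _ _ Hj). pose proof (Hb j). lia.
    - destruct (classic (forall j, (J0 <= j)%nat -> s j = s J0)) as [H|H].
      + exists J0, (s J0); exact H.
      + apply not_all_ex_not in H. destruct H as [j Hj].
        apply imply_to_and in Hj. destruct Hj as [Hj1 Hj2].
        apply (IHK j). pose proof (Hmon _ _ Hj1). pose proof (Hb j). lia. }
  apply (H (c - s 0)%nat 0%nat). lia.
Qed.

Definition ncons (a : nat) (v : nat -> nat) : nat -> nat :=
  fun i => match i with O => a | S i' => v i' end.

Lemma lex_first {m : nat} (p q : nat -> nat) :
  lex_lt lt m p q -> (p 0 <= q 0)%nat.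
Proof.
  intros [k [Hk [He Hl]]]. destruct k.
  - lia.
  - rewrite (He 0%nat); lia.
Qed.

Lemma noemb (m : nat) : forall F : (nat -> nat) -> (nat -> nat),
  ~ (forall v w, lex_lt lt (S m) v w -> lex_lt lt m (F v) (F w)).
Proof.
  induction m; intros F HF.
  - destruct (HF (fun _ => 0%nat) (fun _ => 1%nat)) as [k [Hk _]].
    + exists 0%nat. repeat split; auto; intros; lia.
    + lia.
  - set (z := fun _ : nat => 0%nat).
    set (c := F (ncons 1 z) 0%nat).
    set (s := fun j => F (ncons 0 (ncons j z)) 0%nat).
    assert (Hsm : forall j, (s j <= s (S j))%nat).
    { intro j. apply (lex_first (m:=S m)). apply HF. exists 1%nat.
      split; [lia|]. split.
      - intros i Hi. assert (i = 0%nat) by lia. subst. reflexivity.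
      - simpl. lia. }
    assert (Hsb : forall j, (s j <= c)%nat).
    { intro j. apply (lex_first (m:=S m)). apply HF. exists 0%nat.
      split; [lia|]. split; [intros; lia| simpl; lia]. }
    destruct (ev_const s c Hsm Hsb) as [J [d HJ]].
    set (P := fun v : nat -> nat => ncons 0 (ncons (v 0%nat + J + 1) (fun i => v (S i)))).
    assert (HP0 : forall v, F (P v) 0%nat = d).
    { intro v.
      assert (H1 : (s (v 0%nat + J) <= F (P v) 0)%nat).
      { apply (lex_first (m:=S m)). apply HF. exists 1%nat. split; [lia|]. split.
        - intros i Hi. assert (i = 0%nat) by lia. subst. reflexivity.
        - simpl. lia. }
      assert (H2 : (F (P v) 0 <= s (v 0%nat + J + 2))%nat).
      { apply (lex_first (m:=S m)). apply HF. exists 1%nat. split; [lia|]. split.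
        - intros i Hi. assert (i = 0%nat) by lia. subst. reflexivity.
        - simpl. lia. }
      rewrite HJ in H1 by lia. rewrite HJ in H2 by lia. lia. }
    apply (IHm (fun v => fun i => F (P v) (S i))).
    intros v w [k [Hk [He Hl]]].
    destruct (HF (P v) (P w)) as [k' [Hk' [He' Hl']]].
    { exists (S k). split; [lia|]. split.
      - intros i Hi. destruct i; [reflexivity|]. simpl. destruct i.
        + rewrite (He 0%nat) by lia. reflexivity.
        + apply He. lia.
      - simpl. destruct k; simpl; [lia|exact Hl]. }
    destruct k'.
    + rewrite !HP0 in Hl'. lia.
    + exists k'. split; [lia|]. split.
      * intros i Hi. apply He'. lia.
      * exact Hl'.
Qed.
Fixpoint idx (v : nat -> nat) (j : nat) : nat :=
  match j with O => v O | S j' => (idx v j' + v (S j'))%nat end.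

Lemma idx_mono v i j : (i <= j)%nat -> (idx v i <= idx v j)%nat.
Proof. intro H; induction H; simpl; lia. Qed.

Lemma sum_piece (A B : R) (k0 : nat) : forall h, (k0 <= h)%nat ->
  sum_f_R0 (fun j => if Nat.eqb j k0 then A - B else A) h = INR (S h) * A - B.
Proof.
  induction h; intro Hk.
  - assert (k0 = 0%nat) by lia. subst. simpl. lra.
  - destruct (Nat.eq_dec k0 (S h)).
    + subst. simpl sum_f_R0. rewrite Nat.eqb_refl.
      rewrite (sum_eq _ (fun _ => A)).
      * rewrite sum_cte. rewrite (S_INR (S h)). ring.
      * intros i Hi. destruct (Nat.eqb_spec i (S h)); [lia|reflexivity].
    + rewrite tech5. rewrite IHh by lia.
      destruct (Nat.eqb_spec (S h) k0); [lia|]. rewrite (S_INR (S h)). ring.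
Qed.

Lemma sum_ineq (h : nat) (D : nat -> R) :
  (forall j, 0 < D j) -> (forall j, D (S j) * INR (S h) < D j) ->
  forall v w : nat -> nat, lex_lt lt (S h) v w ->
  sum_f_R0 (fun j => D (idx w j)) h < sum_f_R0 (fun j => D (idx v j)) h.
Proof.
  intros Hp Hd v w [k0 [Hk [He Hl]]].
  assert (Hdec : forall j, D (S j) < D j).
  { intro j. specialize (Hd j). specialize (Hp (S j)).
    assert (1 <= INR (S h)) by (apply (le_INR 1); lia). nra. }
  assert (Hanti : forall i j, (i <= j)%nat -> D j <= D i).
  { intros i j H; induction H; [lra|]. specialize (Hdec m). lra. }
  assert (Heq : forall j, (j < k0)%nat -> idx v j = idx w j).
  { induction j; intro Hj; simpl.
    - apply He; lia.
    - rewrite IHj by lia. rewrite (He (S j)) by lia. reflexivity. }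
  set (a := idx v k0).
  assert (Ha : (a + 1 <= idx w k0)%nat).
  { unfold a. destruct k0; simpl.
    - lia.
    - rewrite Heq by lia. lia. }
  assert (Hb : forall j, (j <= h)%nat ->
     D (idx w j) - D (idx v j) <= (if Nat.eqb j k0 then D (a+1)%nat - D a else D (a+1)%nat)).
  { intros j Hj. destruct (Nat.eqb_spec j k0).
    - subst j. fold a. pose proof (Hanti _ _ Ha). lra.
    - destruct (Nat.lt_ge_cases j k0).
      + rewrite Heq by lia. pose proof (Hp (a+1)%nat). lra.
      + assert (idx w k0 <= idx w j)%nat by (apply idx_mono; lia).
        assert (D (idx w j) <= D (a+1)%nat) by (apply Hanti; lia).
        pose proof (Hp (idx v j)). lra. }
  pose proof (sum_Rle _ _ h Hb) as Hs.
  rewrite minus_sum in Hs. rewrite sum_piece in Hs by lia.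
  specialize (Hd a). rewrite Nat.add_1_r in Hs. lra.
Qed.

Definition Afib (S : (nat -> R) -> Prop) (x : nat -> R) (k : nat) (y : nat -> R) : Prop :=
  S y /\ (forall i, (i < k)%nat -> y i = x i) /\ y k < x k.
Definition cov S x k (N : nat) : Prop :=
  exists l : list R, length l = N /\ forall y, Afib S x k y -> In (y k) l.
Definition rank S x k : nat :=
  epsilon (inhabits 0%nat) (fun N => cov S x k N /\ forall M, cov S x k M -> (N <= M)%nat).

Lemma least_ex (P : nat -> Prop) N0 : P N0 -> exists N, P N /\ forall M, P M -> (N <= M)%nat.
Proof.
  induction N0 as [N0 IH] using (well_founded_induction Wf_nat.lt_wf). intro HP.
  destruct (classic (exists M, (M < N0)%nat /\ P M)) as [[M [HM1 HM2]]|Hn].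
  - exact (IH M HM1 HM2).
  - exists N0. split; auto. intros M HM. destruct (Nat.lt_ge_cases M N0); auto.
    exfalso; apply Hn; eauto.
Qed.

Fixpoint vs (m : nat) (Z : nat -> (nat -> R)) : nat -> R :=
  match m with O => Z O | S m' => vadd (vs m' Z) (Z (S m')) end.

Lemma vs_coord m Z i : vs m Z i = sum_f_R0 (fun j => Z j i) m.
Proof. induction m; simpl; [reflexivity|]. unfold vadd. rewrite IHm. reflexivity. Qed.

Lemma vs_in (S : (nat -> R) -> Prop) m Z :
  (forall x y, S x -> S y -> S (vadd x y)) -> (forall j, S (Z j)) -> S (vs m Z).
Proof. intros Ha HZ; induction m; simpl; auto. Qed.

Lemma sum_Lminus (L : R) (a : nat -> R) N :
  sum_f_R0 (fun j => L - a j) N = INR (S N) * L - sum_f_R0 a N.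
Proof.
  induction N; simpl sum_f_R0.
  - simpl. ring.
  - rewrite IHN. rewrite (S_INR (S N)). ring.
Qed.

Definition Y0 Sg x k : nat -> R :=
  epsilon (inhabits vzero) (fun m => Afib Sg x k m /\ forall y, Afib Sg x k y -> m k <= y k).
Definition stepY Sg x k (z : nat -> R) : nat -> R :=
  epsilon (inhabits vzero) (fun m => Afib Sg x k m /\ z k < m k /\
     forall y, Afib Sg x k y -> z k < y k -> m k <= y k).
Fixpoint Yf Sg x k (j : nat) : nat -> R :=
  match j with O => Y0 Sg x k | S j' => stepY Sg x k (Yf Sg x k j') end.

Lemma finiteness n Sg h x k :
  lex_nonneg_subsemigroup n Sg -> lex_well_ordered n Sg ->
  ord_type_le_omega_pow n Sg h -> Sg x -> (k < n)%nat ->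
  exists N, cov Sg x k N.
Proof.
  intros [Hsub Hadd] Hwo [f Hf] Sx Hk.
  apply NNPP; intro Hn.
  assert (Hl : forall l : list R, exists y, Afib Sg x k y /\ ~ In (y k) l).
  { intro l. apply NNPP; intro H. apply Hn. exists (length l), l. split; auto.
    intros y Hy. apply NNPP; intro H2. apply H; eauto. }
  assert (Hmin : forall T : (nat -> R) -> Prop, (forall y, T y -> Afib Sg x k y) ->
     (exists y, T y) -> exists m, T m /\ forall y, T y -> m k <= y k).
  { intros T HT Hne. destruct (Hwo T) as [m [Tm Hm]].
    - intros y Ty. apply HT; auto.
    - auto.
    - exists m. split; auto. intros y Ty. destruct (Rle_lt_dec (m k) (y k)); auto.
      exfalso. apply (Hm y Ty). exists k. split; auto. split; auto.
      intros i Hi. destruct (HT y Ty) as [_ [E1 _]]. destruct (HT m Tm) as [_ [E2 _]].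
      rewrite E1, E2; auto. }
  set (Y := Yf Sg x k).
  assert (Inv : forall j, Afib Sg x k (Y j) /\ forall y, Afib Sg x k y -> y k <= Y j k ->
     In (y k) (map (fun i => Y i k) (seq 0 (S j)))).
  { induction j.
    - destruct (Hl nil) as [y0 [Hy0 _]].
      destruct (Hmin (Afib Sg x k)) as [m Hm]; eauto.
      pose proof (epsilon_spec (inhabits vzero) (fun m => Afib Sg x k m /\ forall y, Afib Sg x k y -> m k <= y k) (ex_intro _ m Hm)) as [H1 H2].
      fold (Y0 Sg x k) in H1, H2. simpl. split; auto. intros y Hy Hle.
      left. specialize (H2 y Hy). unfold Y in *; simpl in *. lra.
    - destruct IHj as [IA IC].
      set (T := fun y => Afib Sg x k y /\ Y j k < y k).
      assert (Tne : exists y, T y).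
      { destruct (Hl (map (fun i => Y i k) (seq 0 (S j)))) as [y [Hy Hni]].
        exists y. split; auto. destruct (Rle_lt_dec (y k) (Y j k)); auto.
        exfalso. apply Hni. apply IC; auto. }
      destruct (Hmin T) as [m [Tm Hm]]; [intros y [Hy _]; auto | auto |].
      pose proof (epsilon_spec (inhabits vzero) (fun m => Afib Sg x k m /\ Y j k < m k /\
         forall y, Afib Sg x k y -> Y j k < y k -> m k <= y k)) as HS.
      destruct HS as [H1 [H2 H3]].
      { exists m. destruct Tm as [Tm1 Tm2]. split; auto. split; auto.
        intros y Hy Hy2. apply Hm. split; auto. }
      fold (stepY Sg x k (Y j)) in H1, H2, H3.
      change (stepY Sg x k (Y j)) with (Y (S j)) in H1, H2, H3.
      split; auto. intros y Hy Hle.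
      rewrite seq_S, map_app, in_app_iff. simpl.
      destruct (Rle_lt_dec (y k) (Y j k)).
      + left. apply IC; auto.
      + right. left. specialize (H3 y Hy r). lra. }
  assert (Hinc : forall j, Y j k < Y (S j) k).
  { intro j. unfold Y. simpl.
    pose proof (epsilon_spec (inhabits vzero) (fun m => Afib Sg x k m /\ Yf Sg x k j k < m k /\
         forall y, Afib Sg x k y -> Yf Sg x k j k < y k -> m k <= y k)) as HS.
    destruct HS as [_ [H2 _]]; [|exact H2].
    set (T := fun y => Afib Sg x k y /\ Y j k < y k).
    assert (Tne : exists y, T y).
    { destruct (Inv j) as [IA IC].
      destruct (Hl (map (fun i => Y i k) (seq 0 (S j)))) as [y [Hy Hni]].
      exists y. split; auto. destruct (Rle_lt_dec (y k) (Y j k)); auto.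
      exfalso. apply Hni. apply IC; auto. }
    destruct (Hmin T) as [m [Tm Hm]]; [intros y [Hy _]; auto | auto |].
    exists m. destruct Tm as [Tm1 Tm2]. split; auto. split; auto.
    intros y Hy Hy2. apply Hm. split; auto. }
  set (E := fun r => exists j, r = Y j k).
  destruct (completeness E) as [L [HLub HLl]].
  { exists (x k). intros r [j ->]. destruct (Inv j) as [[_ [_ H]] _]. lra. }
  { exists (Y 0%nat k). exists 0%nat. reflexivity. }
  assert (HYL : forall j, Y j k < L).
  { intro j. pose proof (Hinc j). assert (Y (S j) k <= L) by (apply HLub; exists (S j); auto). lra. }
  assert (Hpos : 0 < INR (S h)) by (apply lt_0_INR; lia).
  assert (Hnext : forall i, exists j, L - Y j k < (L - Y i k) / INR (S h)).
  { intro i. apply NNPP; intro Hn2.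
    set (eps := (L - Y i k) / INR (S h)).
    assert (Heps : 0 < eps) by (unfold eps; pose proof (HYL i); apply Rdiv_lt_0_compat; lra).
    assert (L <= L - eps).
    { apply HLl. intros r [j ->]. destruct (Rle_lt_dec (Y j k) (L - eps)); auto.
      exfalso. apply Hn2. exists j. unfold eps in *. lra. }
    lra. }
  set (nx := fun i => epsilon (inhabits 0%nat) (fun j => L - Y j k < (L - Y i k) / INR (S h))).
  assert (Hnx : forall i, L - Y (nx i) k < (L - Y i k) / INR (S h)).
  { intro i. exact (epsilon_spec _ _ (Hnext i)). }
  set (sg := fun j => Nat.iter j nx 0%nat).
  set (D := fun j => L - Y (sg j) k).
  assert (HDp : forall j, 0 < D j) by (intro j; unfold D; pose proof (HYL (sg j)); lra).
  assert (HDd : forall j, D (S j) * INR (S h) < D j).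
  { intro j. unfold D. change (sg (S j)) with (nx (sg j)).
    specialize (Hnx (sg j)). apply (Rmult_lt_compat_r (INR (S h))) in Hnx; auto.
    unfold Rdiv in Hnx. rewrite Rmult_assoc, Rinv_l in Hnx; lra. }
  set (g := fun v : nat -> nat => vs h (fun j => Y (sg (idx v j)))).
  assert (Hg : forall v, Sg (g v)).
  { intro v. apply vs_in; auto. intro j. destruct (Inv (sg (idx v j))) as [[H _] _]; auto. }
  apply (noemb h (fun v => f (g v))).
  intros v w Hvw. apply Hf; auto.
  exists k. split; auto. split.
  - intros i Hi. unfold g. rewrite !vs_coord.
    transitivity (sum_f_R0 (fun _ => x i) h).
    + apply sum_eq. intros j _. destruct (Inv (sg (idx v j))) as [[_ [H _]] _]; auto.
    + symmetry. apply sum_eq. intros j _. destruct (Inv (sg (idx w j))) as [[_ [H _]] _]; auto.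
  - unfold g. rewrite !vs_coord.
    pose proof (sum_ineq h D HDp HDd v w Hvw) as Hs.
    unfold D in Hs. rewrite !sum_Lminus in Hs. lra.
Qed.

Theorem mainTheorem6 (n : nat) (S : (nat -> R) -> Prop) (h : nat) :
  lex_nonneg_subsemigroup n S ->
  lex_well_ordered n S ->
  ord_type_le_omega_pow n S h ->
  ord_type_le_omega_pow n S n.
Proof.
  intros H1 H2 H3.
  exists (fun x k => rank S x k).
  intros x y Sx Sy [k [Hk [He Hl]]]. exists k. split; auto. split.
  - intros i Hi. unfold rank.
    assert (HA : Afib S x i = Afib S y i).
    { apply functional_extensionality; intro z. apply propositional_extensionality.
      unfold Afib. assert (x i = y i) by (apply He; auto).
      split; intros [A1 [A2 A3]]; (split; [exact A1|]); split.
      - intros j Hj. rewrite A2 by auto. apply He. lia.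
      - lra.
      - intros j Hj. rewrite A2 by auto. symmetry. apply He. lia.
      - lra. }
    unfold cov. rewrite HA. reflexivity.
  - destruct (finiteness n S h y k H1 H2 H3 Sy Hk) as [N0 HN0].
    destruct (least_ex _ _ HN0) as [Nm HNm].
    pose proof (epsilon_spec (inhabits 0%nat) (fun N => cov S y k N /\ forall M, cov S y k M -> (N <= M)%nat) (ex_intro _ Nm HNm)) as [[l [Hlen Hcov]] _].
    fold (rank S y k) in Hlen.
    assert (Hxin : In (x k) l).
    { apply (Hcov x). split; [exact Sx|]. split; [|exact Hl]. intros i Hi. apply He; auto. }
    set (l' := remove Req_dec_T (x k) l).
    assert (Hc' : cov S x k (length l')).
    { exists l'. split; auto. intros z [Z1 [Z2 Z3]]. apply in_in_remove; [lra|].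
      apply Hcov. split; auto. split; [|lra]. intros i Hi. rewrite Z2 by auto. apply He; auto. }
    destruct (least_ex _ _ Hc') as [Nx HNx].
    pose proof (epsilon_spec (inhabits 0%nat) (fun N => cov S x k N /\ forall M, cov S x k M -> (N <= M)%nat) (ex_intro _ Nx HNx)) as [_ Hle].
    fold (rank S x k) in Hle. specialize (Hle _ Hc').
    pose proof (remove_length_lt Req_dec_T l (x k) Hxin). fold l' in H. lia.
Qed.
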